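(* Let $J\subsetneq I$ be nonzero square free monomial ideals of $S=K[x_1,\ldots,x_n]$, where $I$ is generated by $r>0$ variables and $J$ is generated by square free monomials of degrees $\geq 2$. Let $s=\rho_2(I)-\rho_2(J)$ be the number of square free monomials of degree $2$ in $I\setminus J$. If $r>s$, then $\operatorname{depth}_S I/J=1$.
   Context: $S=K[x_1,\ldots,x_n]$ is the polynomial ring over a field $K$; for a monomial ideal $L$, $\rho_k(L)$ denotes the number of square free monomials of degree $k$ belonging to $L$; depth is taken over $S$. *)

(* Defs.v *)
From HB Require Import structures.
From mathcomp Require Import all_boot all_order all_algebra.
From Stdlib Require Import ClassicalEpsilon.
Set Implicit Arguments. Unset Strict Implicit. Unset Printing Implicit Defensive.
Import GRing.Theory.
Local Open Scope ring_scope.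

Fixpoint mpoly (R : comNzRingType) (n : nat) : comNzRingType :=
  match n with 0 => R | n'.+1 => {poly (mpoly R n')} end.

(* variable number i (for i < n); x_0 is the outermost 'X *)
Fixpoint xv (R : comNzRingType) (n : nat) (i : nat) : mpoly R n :=
  match n return mpoly R n with
  | 0 => 1
  | n'.+1 => match i with 0 => 'X | i'.+1 => (xv R n' i')%:P end
  end.

Definition var (R : comNzRingType) (n : nat) (i : 'I_n) : mpoly R n := xv R n i.

Definition sqmon (R : comNzRingType) (n : nat) (A : {set 'I_n}) : mpoly R n :=
  \prod_(i in A) @var R n i.

Definition ideal_gen (S : comNzRingType) (G : S -> Prop) : S -> Prop :=
  fun f => exists s : seq (S * S),
    (forall p, p \in s -> G p.2) /\ f = \sum_(p <- s) p.1 * p.2.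

Definition sqfree_ideal (R : comNzRingType) (n : nat) (F : {set {set 'I_n}}) :=
  ideal_gen (fun f : mpoly R n => exists A, A \in F /\ f = @sqmon R n A).

Definition var_ideal (R : comNzRingType) (n : nat) (V : {set 'I_n}) :=
  ideal_gen (fun f : mpoly R n => exists i, i \in V /\ f = @var R n i).

Definition max_ideal (R : comNzRingType) (n : nat) :=
  ideal_gen (fun f : mpoly R n => exists i, f = @var R n i).

Definition pb (P : Prop) : bool :=
  if excluded_middle_informative P then true else false.

Definition rho (R : comNzRingType) (n k : nat) (L : mpoly R n -> Prop) : nat :=
  #|[set A : {set 'I_n} | (#|A| == k) && pb (L (@sqmon R n A))]|.

(* For M = I/J and fs = f_1..f_k: the preimage in I of (f_1,..,f_k)M, i.e. the
   submodule J + (f_1,...,f_k) I of I (membership tested for elements of I). *)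
Definition sub_fM (S : comNzRingType) (I J : S -> Prop) (fs : seq S) : S -> Prop :=
  ideal_gen (fun g => J g \/ exists f v, f \in fs /\ I v /\ g = f * v).

Definition quot_regular (R : comNzRingType) (n : nat) (I J : mpoly R n -> Prop)
    (fs : seq (mpoly R n)) : Prop :=
  [/\ (forall f, f \in fs -> @max_ideal R n f),
      (forall k, (k < size fs)%N -> forall u, I u ->
         sub_fM I J (take k fs) (nth 0 fs k * u) -> sub_fM I J (take k fs) u)
    & (exists u, I u /\ ~ sub_fM I J fs u)].

Definition depth_ge (R : comNzRingType) (n : nat) (I J : mpoly R n -> Prop) (d : nat) :=
  exists fs, size fs = d /\ quot_regular I J fs.

Definition depth_eq (R : comNzRingType) (n : nat) (I J : mpoly R n -> Prop) (d : nat) :=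
  depth_ge I J d /\ ~ depth_ge I J d.+1.

(* Main.v *)
Require Import Defs.
From HB Require Import structures.
From mathcomp Require Import all_boot all_order all_algebra.
From Stdlib Require Import Classical ClassicalEpsilon.
Set Implicit Arguments. Unset Strict Implicit. Unset Printing Implicit Defensive.
Import GRing.Theory.
Local Open Scope ring_scope.

Section IG.
Variable S : comNzRingType.
Implicit Types G H Q : S -> Prop.

Lemma ig0 G : ideal_gen G 0.
Proof. by exists [::]; rewrite big_nil. Qed.

Lemma igD G x y : ideal_gen G x -> ideal_gen G y -> ideal_gen G (x + y).
Proof.
move=> [s [Hs ->]] [t [Ht ->]]; exists (s ++ t); split; last by rewrite big_cat.
by move=> p; rewrite mem_cat => /orP [] ?; [apply: Hs|apply: Ht].
Qed.

Lemma igM G a x : ideal_gen G x -> ideal_gen G (a * x).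
Proof.
move=> [s [Hs ->]]; exists [seq (a * p.1, p.2) | p <- s]; split.
  by move=> p /mapP [q qs ->] /=; apply: Hs.
by rewrite big_map big_distrr /=; apply: eq_bigr => p _; rewrite mulrA.
Qed.

Lemma igG G g : G g -> ideal_gen G g.
Proof.
move=> Hg; exists [:: (1, g)]; split; first by move=> p; rewrite inE => /eqP ->.
by rewrite big_seq1 mul1r.
Qed.

Lemma igN G x : ideal_gen G x -> ideal_gen G (- x).
Proof. by move=> H; rewrite -mulN1r; apply: igM. Qed.

Lemma igB G x y : ideal_gen G x -> ideal_gen G y -> ideal_gen G (x - y).
Proof. by move=> Hx Hy; apply: igD => //; apply: igN. Qed.

Lemma ig_ind G Q : Q 0 -> (forall x y, Q x -> Q y -> Q (x + y)) ->
  (forall a x, Q x -> Q (a * x)) -> (forall g, G g -> Q g) ->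
  forall x, ideal_gen G x -> Q x.
Proof.
move=> Q0 QD QM QG x [s [Hs ->]].
elim: s Hs => [|p s IH] Hs; first by rewrite big_nil.
rewrite big_cons; apply: QD; last by apply: IH => q qs; apply: Hs; rewrite inE qs orbT.
by apply: QM; apply: QG; apply: Hs; rewrite inE eqxx.
Qed.

Lemma ig_mono G H x : (forall g, G g -> ideal_gen H g) -> ideal_gen G x -> ideal_gen H x.
Proof.
move=> GH; apply: ig_ind => //; [exact: ig0|exact: igD|exact: igM].
Qed.

Lemma ig_sum G (I : Type) (r : seq I) (P : pred I) (F : I -> S) :
  (forall i, P i -> ideal_gen G (F i)) -> ideal_gen G (\sum_(i <- r | P i) F i).
Proof.
move=> HF; elim/big_rec: _ => [|i x Pi Hx]; first exact: ig0.
by apply: igD => //; apply: HF.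
Qed.

Lemma subfM_nil (I J : S -> Prop) u : (forall x, J x -> forall a, J (a * x)) ->
  (forall x y, J x -> J y -> J (x + y)) -> J 0 ->
  sub_fM I J [::] u -> J u.
Proof.
move=> JM JD J0; apply: ig_ind => //.
  by move=> a x Hx; apply: JM.
by move=> g [//|[f [v [] ]]].
Qed.

Lemma subfM_nilI (I J : S -> Prop) u : J u -> sub_fM I J [::] u.
Proof. by move=> Ju; apply: igG; left. Qed.

Lemma subfM_one (I J : S -> Prop) f u :
  (forall x, J x -> forall a, J (a * x)) ->
  (forall x y, J x -> J y -> J (x + y)) -> J 0 ->
  (forall x, I x -> forall a, I (a * x)) ->
  (forall x y, I x -> I y -> I (x + y)) -> I 0 ->
  sub_fM I J [:: f] u -> exists j c, [/\ J j, I c & u = j + f * c].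
Proof.
move=> JM JD J0 IM ID I0 Hu.
pose Q := (fun u => exists j c, [/\ J j, I c & u = j + f * c]).
change (Q u). move: u Hu; apply: ig_ind.
- by exists 0, 0; rewrite mulr0 addr0.
- move=> x y [j [c [Hj Hc ->]]] [j' [c' [Hj' Hc' ->]]].
  exists (j + j'), (c + c'); split; [exact: JD|exact: ID|].
  by rewrite mulrDr addrACA.
- move=> a x [j [c [Hj Hc ->]]]; exists (a * j), (a * c); split.
    exact: JM. exact: IM. by rewrite mulrDr mulrCA.
- move=> g [Jg|[f' [v [H1 [Iv ->]]]]]; first by exists g, 0; rewrite mulr0 addr0.
  exists 0, v; split => //; move: H1; rewrite inE => /eqP ->; by rewrite add0r.
Qed.

Lemma subfM_oneI (I J : S -> Prop) f j c : J j -> I c -> sub_fM I J [:: f] (j + f * c).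
Proof.
move=> Jj Ic; apply: igD; apply: igG; [left=> // | right].
by exists f, c; rewrite inE eqxx.
Qed.
End IG.
Section M.
Variable K : fieldType.

Definition lset n (B : {set 'I_n}) : {set 'I_n.+1} := [set lift ord0 i | i in B].

Lemma var_lift n (i : 'I_n) :
  (var K (lift ord0 i) : {poly mpoly K n}) = (var K i)%:P.
Proof. by rewrite /var lift0. Qed.

Lemma var_ord0 n : (var K (ord0 : 'I_n.+1) : {poly mpoly K n}) = 'X.
Proof. by []. Qed.

Lemma sqmon_lset n (B : {set 'I_n}) :
  (sqmon K (lset B) : {poly mpoly K n}) = (sqmon K B)%:P.
Proof.
rewrite /sqmon /lset big_imset /=; last by move=> i j _ _; apply: lift_inj.
rewrite rmorph_prod; apply: eq_bigr => i _; exact: var_lift.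
Qed.

Lemma ord0_lset n (B : {set 'I_n}) : ord0 \notin lset B.
Proof. apply/imsetP => [[i _ E]]. have := neq_lift ord0 i. by rewrite -E eqxx. Qed.

Lemma sqmon_lset0 n (B : {set 'I_n}) :
  (sqmon K (ord0 |: lset B) : {poly mpoly K n}) = 'X * (sqmon K B)%:P.
Proof.
rewrite /sqmon big_setU1 /=; last exact: ord0_lset.
by have := sqmon_lset B; rewrite /sqmon => ->.
Qed.

Lemma lset_decomp n (B : {set 'I_n.+1}) :
  B = if ord0 \in B then ord0 |: lset [set i | lift ord0 i \in B]
      else lset [set i | lift ord0 i \in B].
Proof.
have H : forall j, j != ord0 -> (j \in B) = (j \in lset [set i | lift ord0 i \in B]).
  move=> j; case: (unliftP ord0 j) => [i ->|->]; last by rewrite eqxx.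
  move=> _; rewrite /lset mem_imset ?inE //; exact: lift_inj.
case: ifP => B0; apply/setP => j; rewrite ?inE.
  by case: (eqVneq j ord0) => [->|/H] //=; rewrite B0.
case: (eqVneq j ord0) => [->|/H] //; rewrite B0; apply/esym/negbTE; exact: ord0_lset.
Qed.

Lemma card_lset n (B : {set 'I_n}) : #|lset B| = #|B|.
Proof. by rewrite /lset card_imset //; exact: lift_inj. Qed.


Definition F0 n (F : {set {set 'I_n.+1}}) : {set {set 'I_n}} := [set B | lset B \in F].
Definition F1 n (F : {set {set 'I_n.+1}}) : {set {set 'I_n}} := [set B | ord0 |: lset B \in F].

Lemma sqJ0 n (F : {set {set 'I_n}}) : @sqfree_ideal K n F 0. Proof. exact: ig0. Qed.
Lemma sqJD n (F : {set {set 'I_n}}) x y : @sqfree_ideal K n F x -> @sqfree_ideal K n F y -> @sqfree_ideal K n F (x + y).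
Proof. exact: igD. Qed.
Lemma sqJM n (F : {set {set 'I_n}}) a x : @sqfree_ideal K n F x -> @sqfree_ideal K n F (a * x).
Proof. exact: igM. Qed.
Lemma sqJG n (F : {set {set 'I_n}}) (A : {set 'I_n}) : A \in F -> @sqfree_ideal K n F (sqmon K A).
Proof. by move=> HA; apply: igG; exists A. Qed.
Lemma sqJsub n (F F' : {set {set 'I_n}}) x : F \subset F' ->
  @sqfree_ideal K n F x -> @sqfree_ideal K n F' x.
Proof.
move=> sub; apply: ig_mono => g [A [HA ->]]; apply: sqJG; exact: (subsetP sub).
Qed.

Lemma char1 n (F : {set {set 'I_n.+1}}) (q : {poly mpoly K n}) :
  @sqfree_ideal K n.+1 F q ->
  @sqfree_ideal K n (F0 F) q`_0 /\ forall k, @sqfree_ideal K n (F0 F :|: F1 F) q`_k.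
Proof.
pose Q := fun q : mpoly K n.+1 => @sqfree_ideal K n (F0 F) (q : {poly mpoly K n})`_0 /\
   forall k, @sqfree_ideal K n (F0 F :|: F1 F) (q : {poly mpoly K n})`_k.
move=> Hq; change (Q q); move: q Hq; apply: ig_ind; rewrite /Q.
- by split=> [|k]; rewrite coef0; apply: sqJ0.
- move=> x y [Hx0 Hx] [Hy0 Hy]; split=> [|k]; rewrite coefD; apply: sqJD => //.
- move=> a x [Hx0 Hx]; split=> [|k]; rewrite coefM.
    by rewrite big_ord1; apply: sqJM.
  by apply: ig_sum => i _; apply: sqJM.
- move=> g [A [HA ->]].
  have HA' := HA; rewrite (lset_decomp A) in HA' *.
  set B := [set i | lift ord0 i \in A] in HA' *.
  case: ifP => A0 in HA' *.
    have HB : B \in F1 F by rewrite inE.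
    rewrite sqmon_lset0; split=> [|k]; rewrite coefXM /=; first by apply: sqJ0.
    case: ifP => _; first by apply: sqJ0.
    rewrite coefC; case: ifP => _; last by apply: sqJ0.
    by apply: sqJG; rewrite inE HB orbT.
  have HB : B \in F0 F by rewrite inE.
  rewrite sqmon_lset; split=> [|k]; rewrite coefC /=; first by apply: sqJG.
  case: ifP => _; last by apply: sqJ0.
  by apply: sqJG; rewrite inE HB.
Qed.

Lemma liftJ n (F : {set {set 'I_n.+1}}) (G : {set {set 'I_n}}) (m : {poly mpoly K n}) x :
  (forall B, B \in G -> @sqfree_ideal K n.+1 F (m * (sqmon K B)%:P)) ->
  @sqfree_ideal K n G x -> @sqfree_ideal K n.+1 F (m * x%:P).
Proof.
move=> HG Hx.
pose Q := fun x : mpoly K n => @sqfree_ideal K n.+1 F (m * x%:P).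
change (Q x); move: x Hx; apply: ig_ind; rewrite /Q.
- by rewrite polyC0 mulr0; apply: sqJ0.
- by move=> x y Hx Hy; rewrite polyCD mulrDr; apply: sqJD.
- by move=> a x Hx; rewrite polyCM mulrCA; apply: sqJM.
- by move=> g [B [HB ->]]; apply: HG.
Qed.

Lemma char2 n (F : {set {set 'I_n.+1}}) (p : {poly mpoly K n}) :
  @sqfree_ideal K n (F0 F) p`_0 ->
  (forall k, (0 < k)%N -> @sqfree_ideal K n (F0 F :|: F1 F) p`_k) ->
  @sqfree_ideal K n.+1 F p.
Proof.
move=> H0 Hk; rewrite -[p]coefK poly_def.
apply: ig_sum => -[[|k] Hk'] _ /=.
  rewrite expr0 -mul_polyC mulr1 -[_%:P]mul1r; apply: liftJ H0 => B.
  by rewrite inE => HB; rewrite mul1r -sqmon_lset; apply: sqJG.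
rewrite -mul_polyC mulrC; apply: liftJ (Hk k.+1 isT) => B.
rewrite inE => /orP [] HB; rewrite inE in HB.
  by rewrite -sqmon_lset; apply: sqJM; apply: sqJG.
by rewrite exprSr -mulrA -sqmon_lset0; apply: sqJM; apply: sqJG.
Qed.


Definition gs n : mpoly K n := \sum_(i < n) var K i.

Lemma gsS n : (gs n.+1 : {poly mpoly K n}) = 'X + (gs n)%:P.
Proof.
rewrite /gs big_ord_recl var_ord0 rmorph_sum; congr (_ + _).
Qed.

Lemma reg n (F G : {set {set 'I_n}}) (p : mpoly K n) :
  (forall B, B \in F -> (2 <= #|B|)%N) -> (forall B, B \in G -> (0 < #|B|)%N) ->
  @sqfree_ideal K n F (gs n * p) -> @sqfree_ideal K n G p -> @sqfree_ideal K n F p.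
Proof.
elim: n F G p => [|n IH] F G p HF HG H1 H2.
  suff -> : p = 0 by apply: sqJ0.
  clear H1; move: p H2; apply: ig_ind => //.
  - by move=> x y -> ->; rewrite addr0.
  - by move=> a x ->; rewrite mulr0.
  - move=> g [B [HB _]]; have := HG B HB; have := max_card B.
    by rewrite card_ord leqn0 => /eqP ->.
have [Hq0 Hq] := char1 H1.
have qE : forall k, (gs n.+1 * p : {poly mpoly K n})`_k =
    (if k == 0%N then 0 else p`_k.-1) + gs n * p`_k.
  by move=> k; rewrite gsS mulrDl coefD coefXM coefCM.
have Hall : forall m k, (size p <= k + m)%N -> @sqfree_ideal K n (F0 F :|: F1 F) p`_k.
  elim=> [|m IHm] k Hs.
    by rewrite addn0 in Hs; rewrite nth_default //; apply: ig0.
  move: Hs; rewrite -addSnnS => /IHm H.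
  have := Hq k.+1; rewrite qE /= => H'.
  have -> : p`_k = (p`_k + gs n * p`_k.+1) - gs n * p`_k.+1 by rewrite addrK.
  by apply: igB => //; apply: sqJM.
have Hp : forall k, @sqfree_ideal K n (F0 F :|: F1 F) p`_k.
  by move=> k; apply: (Hall (size p)); rewrite leq_addl.
apply: char2; last by move=> k _; apply: Hp.
apply: (IH _ (F0 F :|: F1 F)) => //.
- by move=> B; rewrite inE => HB; rewrite -(card_lset B); apply: HF.
- move=> B; rewrite !inE => /orP [] HB.
    by rewrite -(card_lset B); apply: leq_trans (HF _ HB).
  have := HF _ HB; rewrite cardsU1 ord0_lset card_lset //.
- by have := Hq0; rewrite qE /= add0r.
Qed.

Fixpoint psi (n : nat) : {rmorphism mpoly K n -> {poly K}} :=
  match n return {rmorphism mpoly K n -> {poly K}} with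
  | 0 => GRing.RMorphism.clone _ _ (@polyC K) _
  | n'.+1 => GRing.RMorphism.clone _ _ (horner_morph (fun x : mpoly K n' => mulrC ('X : {poly K}) (psi n' x))) _
  end.
Lemma psi_var n (i : 'I_n) : psi n (var K i) = 'X.
Proof.
elim: n i => [|n IH] i; first by case: i.
case: i => [[|i] Hi] /=; rewrite /var /=.
  by rewrite horner_morphX.
by rewrite horner_morphC (IH (Ordinal (Hi : (i < n)%N))).
Qed.

Definition Dk k (q : {poly K}) := exists q', q = 'X ^+ k * q'.

Lemma psi_ig n k (G : mpoly K n -> Prop) x :
  (forall g, G g -> Dk k (psi n g)) -> ideal_gen G x -> Dk k (psi n x).
Proof.
move=> HG Hx; pose Q := fun x => Dk k (psi n x); change (Q x); move: x Hx; apply: ig_ind; rewrite /Q //.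
- by exists 0; rewrite rmorph0 mulr0.
- by move=> x1 y [a Ha] [b Hb]; rewrite rmorphD /= Ha Hb -mulrDr; exists (a + b).
- by move=> a x1 [b Hb]; rewrite rmorphM /= Hb mulrCA; exists (psi n a * b).
Qed.

Lemma D_var n (i : 'I_n) : Dk 1 (psi n (var K i)).
Proof. by rewrite psi_var; exists 1; rewrite mulr1 expr1. Qed.

Lemma D_max n x : @max_ideal K n x -> Dk 1 (psi n x).
Proof. by apply: psi_ig => g [i ->]; apply: D_var. Qed.

Lemma D_varI n (V : {set 'I_n}) x : @var_ideal K n V x -> Dk 1 (psi n x).
Proof. by apply: psi_ig => g [i [_ ->]]; apply: D_var. Qed.

Lemma D_sq n (F : {set {set 'I_n}}) x : (forall A, A \in F -> (2 <= #|A|)%N) ->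
  @sqfree_ideal K n F x -> Dk 2 (psi n x).
Proof.
move=> HF; apply: psi_ig => g [A [HA ->]].
rewrite /sqmon rmorph_prod /=.
rewrite (eq_bigr (fun _ => 'X)); last by move=> i _; apply: psi_var.
rewrite prodr_const -(subnKC (HF A HA)) exprD; by exists ('X ^+ (#|A| - 2)).
Qed.

Lemma D11 a b : Dk 1 a -> Dk 1 b -> Dk 2 (a * b).
Proof.
by move=> [a' ->] [b' ->]; exists (a' * b'); rewrite mulrACA -exprD.
Qed.

Lemma notD2X : ~ Dk 2 'X.
Proof.
move=> [q] /(congr1 (fun p : {poly K} => p`_1)).
by rewrite coefX coefXnM /= => /eqP; rewrite oner_eq0.
Qed.


Definition PC n (C : {set 'I_n}) :=
  ideal_gen (fun g : mpoly K n => exists i, i \in C /\ g = var K i).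
Definition PN n (C : {set 'I_n}) :=
  ideal_gen (fun g : mpoly K n => exists i, i \notin C /\ g = var K i).

Lemma split_max n (C : {set 'I_n}) f : @max_ideal K n f ->
  exists a, PC C a /\ PN C (f - a).
Proof.
move=> Hf; pose Q := fun f => exists a, PC C a /\ PN C (f - a).
change (Q f); move: f Hf; apply: ig_ind; rewrite /Q.
- by exists 0; rewrite subr0; split; apply: ig0.
- move=> x y [a [Ha Hxa]] [b [Hb Hyb]]; exists (a + b); split; first exact: igD.
  by rewrite opprD addrACA; apply: igD.
- move=> c x [a [Ha Hxa]]; exists (c * a); split; first exact: igM.
  by rewrite -mulrBr; apply: igM.
- move=> g [i ->]; case Hi: (i \in C).
    by exists (var K i); rewrite subrr; split; [apply: igG; exists i|apply: ig0].
  exists 0; rewrite subr0; split; first exact: ig0.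
  by apply: igG; exists i; rewrite Hi.
Qed.

Lemma prod_J n (C : {set 'I_n}) (J : mpoly K n -> Prop) x y :
  J 0 -> (forall u v, J u -> J v -> J (u + v)) -> (forall a u, J u -> J (a * u)) ->
  (forall w b, w \in C -> b \notin C -> J (var K w * var K b)) ->
  PC C x -> PN C y -> J (x * y).
Proof.
move=> J0 JD JM Hwb Hx Hy.
pose Q := fun x => J (x * y); change (Q x); move: x Hx; apply: ig_ind; rewrite /Q.
- by rewrite mul0r.
- by move=> u v Hu Hv; rewrite mulrDl; apply: JD.
- by move=> a u Hu; rewrite -mulrA; apply: JM.
move=> g [w [Hw ->]].
pose Q' := fun y => J (var K w * y); change (Q' y); clear Q; move: y Hy; apply: ig_ind; rewrite /Q'.
- by rewrite mulr0.
- by move=> u v Hu Hv; rewrite mulrDr; apply: JD.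
- by move=> a u Hu; rewrite mulrCA; apply: JM.
by move=> g' [b [Hb ->]]; apply: Hwb.
Qed.

Lemma var2 n (w b : 'I_n) : w != b -> sqmon K [set w; b] = var K w * var K b.
Proof.
move=> wb; rewrite /sqmon big_setU1 /=; last by rewrite inE.
by rewrite big_set1.
Qed.

Lemma pbE (P : Prop) : pb P = true <-> P.
Proof. by rewrite /pb; case: excluded_middle_informative. Qed.

Definition EW n (J : mpoly K n -> Prop) (W : {set 'I_n}) :=
  [set A : {set 'I_n} | [&& #|A| == 2, [exists w in W, w \in A] & ~~ pb (J (sqmon K A))]].

Lemma cnt n (V : {set 'I_n}) (J : mpoly K n -> Prop) :
  (forall C : {set 'I_n}, C \subset V -> C != set0 ->
     ~ (forall w b, w \in C -> b \notin C -> J (sqmon K [set w; b]))) ->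
  forall W : {set 'I_n}, W \subset V -> (#|W| <= #|EW J W|)%N.
Proof.
move=> Hno W; move Hm : #|W| => m; elim: m W Hm => [|m IH] W Hm WV //.
have W0 : W != set0 by apply/eqP => W0; rewrite W0 cards0 in Hm.
have [w [b [Hw [Hb HJ]]]] : exists w b, [/\ w \in W, b \notin W & ~ J (sqmon K [set w; b])].
  apply: NNPP => Hn; apply: (Hno W WV W0) => w b Hw Hb; apply: NNPP => HJ.
  by apply: Hn; exists w, b.
have Hm' : #|W :\ w| = m by move: Hm; rewrite (cardsD1 w W) Hw add1n => -[].
have := IH _ Hm' (subset_trans (subD1set W w) WV).
move=> H; apply: leq_ltn_trans H _; apply: proper_card; apply/properP; split.
  apply/subsetP => A; rewrite !inE => /and3P [-> /existsP [x /andP [xW xA]] ->].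
  by rewrite andbT; apply/existsP; exists x; move: xW; rewrite inE => /andP [_ ->].
exists [set w; b].
  rewrite inE cards2; have -> : w != b by apply/eqP => E; move: Hb; rewrite -E Hw.
  rewrite /=; apply/andP; split; first by apply/existsP; exists w; rewrite Hw !inE eqxx.
  by apply/negP => /pbE.
rewrite inE negb_and; apply/orP; right; rewrite negb_and; apply/orP; left.
rewrite negb_exists; apply/forallP => x; rewrite !inE.
apply/negP => /andP [/andP [xw xW] /orP [] /eqP E]; first by rewrite E eqxx in xw.
by move: Hb; rewrite -E xW.
Qed.


Lemma D_add k a b : Dk k a -> Dk k b -> Dk k (a + b).
Proof. by move=> [a' ->] [b' ->]; exists (a' + b'); rewrite mulrDr. Qed.
Lemma D_sub k a b : Dk k a -> Dk k b -> Dk k (a - b).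
Proof. by move=> [a' ->] [b' ->]; exists (a' - b'); rewrite mulrBr. Qed.

End M.

From mathcomp Require Import ring.


Lemma main_aux (K : fieldType) (n r : nat)
    (V : {set 'I_n}) (F : {set {set 'I_n}}) :
  let I := @var_ideal K n V in
  let J := @sqfree_ideal K n F in
  #|V| = r -> (0 < r)%N ->
  F != set0 -> (forall A, A \in F -> (2 <= #|A|)%N) ->
  (forall f, J f -> I f) -> (exists f, I f /\ ~ J f) ->
  let s := (rho 2%N I - rho 2%N J)%N in
  (s < r)%N ->
  depth_eq I J 1%N.
Proof.
move=> I J HV Hr HF0 HF2 HJI Hex s Hs.
have I0 : I 0 by apply: ig0.
have ID : forall x y, I x -> I y -> I (x + y) by move=> *; apply: igD.
have IM : forall x, I x -> forall a, I (a * x) by move=> *; apply: igM.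
have J0 : J 0 by apply: ig0.
have JD : forall x y, J x -> J y -> J (x + y) by move=> *; apply: igD.
have JM : forall x, J x -> forall a, J (a * x) by move=> *; apply: igM.
have [v0 Hv0] : exists v0, v0 \in V by apply/card_gt0P; rewrite HV.
have Ivar : forall i, i \in V -> I (var K i) by move=> i Hi; apply: igG; exists i.
have DJ : forall x, J x -> Dk 2 (psi K n x) by move=> x; apply: D_sq.
have DI : forall x, I x -> Dk 1 (psi K n x) by move=> x; apply: D_varI.
have Dgs : Dk 1 (psi K n (gs K n)).
  apply: D_max; apply: ig_sum => i _; apply: igG; by exists i.
split.
  exists [:: gs K n]; split => //; split.
  - move=> f; rewrite inE => /eqP ->; apply: ig_sum => i _; apply: igG; by exists i.
  - move=> [|k] // _ u Hu /=.
    move/(subfM_nil JM JD J0) => H; apply: subfM_nilI.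
    apply: (@reg K n F [set [set v] | v in V]) => //.
      by move=> B /imsetP [v _ ->]; rewrite cards1.
    move: Hu; apply: ig_mono => g [i [Hi ->]]; apply: igG; exists [set i]; split.
      exact: imset_f.
    by rewrite /sqmon big_set1.
  - exists (var K v0); split; first exact: Ivar.
    move/(subfM_one JM JD J0 IM ID I0) => [j [c [Hj Hc E]]].
    suff : Dk 2 (psi K n (var K v0)) by rewrite psi_var; apply: notD2X.
    rewrite E rmorphD rmorphM /=.
    by apply: D_add; [apply: DJ|apply: D11 => //; apply: DI].
move=> [fs [Hsz [Hmax Hreg [u [Iu nu]]]]].
case: fs Hsz Hmax Hreg nu => [|f1 [|f2 [|? ?]]] // _ Hmax Hreg _.
have Hf1 : max_ideal f1 by apply: Hmax; rewrite inE eqxx.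
have Hf2 : max_ideal f2 by apply: Hmax; rewrite !inE eqxx orbT.
have R0 := Hreg 0%N isT; have R1 := Hreg 1%N isT; rewrite /= in R0 R1.
case: (classic (exists C : {set 'I_n}, [/\ C \subset V, C != set0 &
   forall w b, w \in C -> b \notin C -> J (sqmon K [set w; b])])) => [[C [CV C0 Hcl]] | Hno].
  have [a [Ha1 Ha2]] := split_max C Hf1.
  have [b [Hb1 Hb2]] := split_max C Hf2.
  have Jwb : forall w b, w \in C -> b \notin C -> J (var K w * var K b).
    move=> w b' Hw Hb; rewrite -var2; first exact: Hcl.
    by apply/eqP => E; move: Hb; rewrite -E Hw.
  have JM' : forall a u, J u -> J (a * u) by move=> *; apply: igM.
  have PJ := fun x y => @prod_J K n C J x y J0 JD JM' Jwb.
  have PCI : forall x, PC C x -> I x.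
    move=> x; apply: ig_mono => g [i [Hi ->]]; apply: Ivar; exact: (subsetP CV).
  have Ia := PCI _ Ha1; have Ib := PCI _ Hb1.
  have E1 : J (f2 * a - f1 * b).
    have -> : f2 * a - f1 * b = a * (f2 - b) - b * (f1 - a) by ring.
    by apply: igB; apply: PJ.
  have : sub_fM I J [:: f1] (f2 * a).
    have -> : f2 * a = (f2 * a - f1 * b) + f1 * b by rewrite subrK.
    exact: subfM_oneI.
  move/(R1 a Ia)/(subfM_one JM JD J0 IM ID I0) => [j [c [Hj Hc Ea]]].
  have /set0Pn [w Hw] := C0.
  have Hwv : I (var K w * c - var K w).
    by apply: igB; [apply: IM|apply: Ivar; exact: (subsetP CV)].
  have : sub_fM I J [::] (f1 * (var K w * c - var K w)).
    apply: subfM_nilI.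
    have -> : f1 * (var K w * c - var K w) = - (var K w * j) - var K w * (f1 - a).
      by rewrite Ea; ring.
    apply: igB; first by apply: igN; apply: JM.
    by apply: PJ => //; apply: igG; exists w.
  move/(R0 _ Hwv)/(subfM_nil JM JD J0) => HJv.
  suff : Dk 2 (psi K n (var K w)) by rewrite psi_var; apply: notD2X.
  have -> : var K w = var K w * c - (var K w * c - var K w) by ring.
  rewrite rmorphB /= rmorphM /=.
  by apply: D_sub; [apply: D11; [apply: D_var|apply: DI]|apply: DJ].
have := @cnt K n V J _ V (subxx V).
have HH : forall C : {set 'I_n}, C \subset V -> C != set0 ->
     ~ (forall w b, w \in C -> b \notin C -> J (sqmon K [set w; b])).
  by move=> C CV C0 H; apply: Hno; exists C.
move=> /(_ HH) Hle.
move: Hs; rewrite /s /rho.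
set SI := [set A : {set 'I_n} | _ & pb (I _)].
set SJ := [set A : {set 'I_n} | _ & pb (J _)].
have SJI : SJ \subset SI.
  apply/subsetP => A; rewrite !inE => /andP [-> /pbE HA] /=; apply/pbE; exact: HJI.
have sub1 : EW J V \subset SI :\: SJ.
  apply/subsetP => A; rewrite !inE => /and3P [HA /existsP [w /andP [wV wA]] nJ].
  rewrite HA (negbTE nJ) /=; apply/pbE.
  rewrite /sqmon (big_setD1 w wA) /= mulrC; apply: IM; exact: Ivar.
have := subset_leq_card sub1; rewrite cardsD (setIidPr SJI) => H2.
rewrite -HV => H3.
have := leq_trans Hle H2; by rewrite leqNgt H3.
Qed.

Local Close Scope ring_scope.

Theorem proposition1p14 (K : fieldType) (n r : nat)
    (V : {set 'I_n}) (F : {set {set 'I_n}}) :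
  let I := @var_ideal K n V in
  let J := @sqfree_ideal K n F in
  #|V| = r -> (0 < r)%N ->
  F != set0 -> (forall A, A \in F -> (2 <= #|A|)%N) ->
  (forall f, J f -> I f) -> (exists f, I f /\ ~ J f) ->
  let s := (rho 2 I - rho 2 J)%N in
  (s < r)%N ->
  depth_eq I J 1.
Proof. exact: main_aux. Qed.
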